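(* Let $d\ge1$, $r\ge3$ and $n=dr\ge2$. If $r\ge 2^9$, then $$2^{n-2}r^2(2d+5)\Big(1-\frac{20\log_2^2 r}{2n+5r}\Big)\le \mathrm{td}(Q_n(d,r))\le 2^{n-2}r^2(2d+5)\Big(1-\frac{8(r-1)}{2nr+5r^2}\Big);$$ and if $3\le r<2^9$, then $$2^{n-2}(2nr+r^2)\le \mathrm{td}(Q_n(d,r))\le 2^{n-2}(2nr+5r^2-8r+8).$$
   Context: $\mathbb{Z}_2^n=\{0,1\}^n$ with coordinatewise addition mod 2; $e_i$ is the $i$-th standard basis vector, subscripts read modulo $n$. The recursive cube of rings $Q_n(d,r)$ (for $n\ge d$, $dr\equiv0\pmod n$) is the simple graph on $\mathbb{Z}_2^n\times\mathbb{Z}_r$ in which $(a,x)$ is adjacent to $(a+e_{i+dx},x)$ for $1\le i\le d$ and to $(a,x\pm1)$; it is vertex-transitive. For a vertex-transitive graph $X$, the total distance $\mathrm{td}(X)=\sum_{v\in V(X)}\mathrm{dist}(u,v)$ for any fixed vertex $u$ (here one may take $u=(0_n,0)$). $\log_2^2 r=(\log_2 r)^2$. *)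

(* Defs.v *)
From mathcomp Require Import all_boot.
Set Implicit Arguments. Unset Strict Implicit. Unset Printing Implicit Defensive.

Section RCR.
Variables n d r : nat.

(* Vertex set Z_2^n x Z_r.  Coordinate j : 'I_n stands for the basis
   vector e_j, indices read modulo n (so e_n is coordinate 0). *)
Definition RCRvert : finType := ({ffun 'I_n -> bool} * 'I_r)%type.

Definition flipbit (a : {ffun 'I_n -> bool}) (k : nat) : {ffun 'I_n -> bool} :=
  [ffun j : 'I_n => a j (+) (val j == k %% n)].

Definition RCRadj (u v : RCRvert) : bool :=
  ((v.1 == u.1) &&
     ((val v.2 == (val u.2 + 1) %% r) || (val u.2 == (val v.2 + 1) %% r)))
  || ((v.2 == u.2) &&
      [exists i : 'I_d, v.1 == flipbit u.1 (i.+1 + d * val u.2)]).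

Fixpoint RCRball (u : RCRvert) (k : nat) : {set RCRvert} :=
  match k with
  | 0 => [set u]
  | k'.+1 => RCRball u k' :|: [set v | [exists w in RCRball u k', RCRadj w v]]
  end.

(* graph distance: least k with v in the ball of radius k around u
   (a shortest path has fewer than #|V| edges) *)
Definition RCRdist (u v : RCRvert) : nat :=
  find (fun k => v \in RCRball u k) (iota 0 #|RCRvert|).

Definition RCRtd : nat :=
  \sum_(u : RCRvert | (u.1 == [ffun => false]) && (val u.2 == 0))
     \sum_(v : RCRvert) RCRdist u v.

End RCR.

(* Main.v *)
Require Import Defs.
From mathcomp Require Import all_boot.
From Stdlib Require Import Reals.
From mathcomp Require Import zify.
From Stdlib Require Import Lra.
Set Implicit Arguments. Unset Strict Implicit. Unset Printing Implicit Defensive.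

Section G.
Variables n d r : nat.
Hypothesis d1 : 0 < d.
Hypothesis r3 : 2 < r.
Hypothesis hn : n = d * r.

Lemma n_gt0 : 0 < n. Proof. rewrite hn; nia. Qed.

Definition wt (a : {ffun 'I_n -> bool}) : nat := \sum_(j : 'I_n) (a j : nat).

Definition blk (a : {ffun 'I_n -> bool}) (y : nat) : bool :=
  [exists j : 'I_n, a j && [exists i : 'I_d, val j == (i.+1 + d * y) %% n]].

Definition valid (a : {ffun 'I_n -> bool}) (x p q m : nat) (s : bool) : Prop :=
  (forall y, y < r -> blk a y -> (y <= q) || (r <= y + p)) /\
  (if s then (m <= q) && (m %% r == x) else (m <= p) && ((x + m) %% r == 0)).

Definition cost p q m := 2 * (p + q) - m.

Definition Good (v : RCRvert n r) (k : nat) : Prop :=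
  exists p q m s, valid v.1 (val v.2) p q m s /\ wt v.1 + cost p q m <= k.

Lemma coord_inj (i i' : 'I_d) (x y : nat) : x < r -> y < r ->
  (i.+1 + d * x) %% n = (i'.+1 + d * y) %% n -> x = y.
Proof.
move=> xr yr H.
have bnd (j : 'I_d) z : z < r -> j.+1 + d * z <= n.
  move=> zr; rewrite hn (leq_trans (_ : _ <= d * z.+1)) //.
    by rewrite mulnS leq_add2r.
  by rewrite leq_mul2l zr orbT.
have b1 := bnd i x xr; have b2 := bnd i' y yr.
have np := n_gt0.
have e : i.+1 + d * x = i'.+1 + d * y.
  have p1 : 0 < i.+1 + d * x by []. have p2 : 0 < i'.+1 + d * y by [].
  move: H b1 b2 p1 p2.
  move: (i.+1 + d * x) (i'.+1 + d * y) => u1 u2 H b1 b2 p1 p2.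
  move: b1; rewrite leq_eqVlt => /orP[/eqP E1|L1]; move: b2; rewrite leq_eqVlt => /orP[/eqP E2|L2].
  - by rewrite E1 E2.
  - by move: H; rewrite E1 modnn (modn_small L2) => E; move: p2; rewrite -E.
  - by move: H; rewrite E2 modnn (modn_small L1) => E; move: p1; rewrite E.
  - by move: H; rewrite (modn_small L1) (modn_small L2).
have key (j : 'I_d) z : (j + z * d) %/ d = z.
  by rewrite addnC divnMDl // divn_small // addn0.
by rewrite -(key i x) -(key i' y) mulnC [y * d]mulnC; move: e; rewrite !addSn => -[->].
Qed.


Lemma flipbitE (a : {ffun 'I_n -> bool}) k (j : 'I_n) : flipbit a k j = a j (+) (val j == k %% n).
Proof. by rewrite ffunE. Qed.

Lemma wt_flip_le (a : {ffun 'I_n -> bool}) k : wt (flipbit a k) <= (wt a).+1.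
Proof.
have np := n_gt0.
pose j0 : 'I_n := Ordinal (ltn_pmod k np).
rewrite /wt (bigD1 j0) //= [X in _ <= X.+1](bigD1 j0) //= flipbitE eqxx.
rewrite (eq_bigr (fun j => (a j : nat))); last first.
  move=> j /= hj; rewrite flipbitE.
  have -> : (val j == k %% n) = false.
    by apply/negbTE; apply: contra hj => /eqP e; apply/eqP/val_inj.
  by rewrite addbF.
by case: (a j0) => /=; lia.
Qed.

Lemma wt_flip_true (a : {ffun 'I_n -> bool}) k (j0 : 'I_n) : a j0 -> val j0 = k %% n -> (wt (flipbit a k)).+1 = wt a.
Proof.
move=> aj e.
rewrite /wt (bigD1 j0) //= [in RHS](bigD1 j0) //= flipbitE e eqxx aj /=.
rewrite (eq_bigr (fun j => (a j : nat))) //.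
move=> j /= hj; rewrite flipbitE.
have -> : (val j == k %% n) = false.
  by apply/negbTE; apply: contra hj => /eqP e'; apply/eqP/val_inj; rewrite /= e'.
by rewrite addbF.
Qed.

Lemma pos_cover x p q m s : x < r ->
  (if s then (m <= q) && (m %% r == x) else (m <= p) && ((x + m) %% r == 0)) ->
  (x <= q) || (r <= x + p).
Proof.
move=> xr; case: s => /andP[mq /eqP e].
  by rewrite -e (leq_trans (leq_mod _ _) mq).
case: (posnP x) => [->|xp]; first by rewrite leq0n.
apply/orP; right.
have : r %| x + m by apply/dvdnP; exists ((x + m) %/ r); rewrite {1}(divn_eq (x + m) r) e addn0.
move/(dvdn_leq); rewrite addn_gt0 xp => /(_ isT) h.
by rewrite (leq_trans h) // leq_add2l.
Qed.

Lemma modS_pred m x' : 0 < m -> x' < r -> m %% r = (x'.+1) %% r -> (m.-1) %% r = x'.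
Proof.
move=> mp xr e.
rewrite -(modn_small xr).
apply/eqP; rewrite -(eqn_modDr 1) !addn1 prednK //.
by apply/eqP.
Qed.

Lemma step (w v : RCRvert n r) k : RCRadj d w v -> Good w k -> Good v k.+1.
Proof.
case: w => a [x xr]; case: v => b [x' xr'] /=.
rewrite /RCRadj /= => adj [p [q [m [s [[cov pos] wk]]]]].
move: cov pos wk; rewrite /= => cov pos wk.
move: adj => /orP[/andP[/eqP eb /orP[/eqP fw|/eqP bw]] | /andP[/eqP ev /existsP[i /eqP eb]]].
-
  subst b; case: s pos => /andP[mq /eqP mx].
  + exists p, (maxn q m.+1), m.+1, true; split; last by move: wk; rewrite /cost /=; lia.
    split=> [y yr hb|]; first by move: (cov y yr hb) => /orP[h|h]; apply/orP; [left|right]; lia.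
    by rewrite leq_maxr /= fw -mx modnDml addn1 eqxx.
  + case: (posnP m) => [m0|mp].
    * subst m; move: mx; rewrite addn0 modn_small // => x0; subst x.
      exists p, (maxn q 1), 1, true; split; last by move: wk; rewrite /cost /=; lia.
      split=> [y yr hb|]; first by move: (cov y yr hb) => /orP[h|h]; apply/orP; [left|right]; lia.
      by rewrite leq_maxr /= fw.
    * exists p, q, m.-1, false; split; last by move: wk; rewrite /cost /=; lia.
      split=> //; rewrite (leq_trans (leq_pred _) mq) /= fw modnDml.
      by rewrite addn1 addSn -addnS prednK // mx.
-
  subst b; case: s pos => /andP[mq /eqP mx].
  + case: (posnP m) => [m0|mp].
    * subst m; move: mx; rewrite mod0n => x0.
      exists (maxn p 1), q, 1, false; split; last by move: wk; rewrite /cost /=; lia.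
      split=> [y yr hb|]; first by move: (cov y yr hb) => /orP[h|h]; apply/orP; [left|right]; lia.
      by rewrite leq_maxr /= -bw -x0.
    * exists p, q, m.-1, true; split; last by move: wk; rewrite /cost /=; lia.
      split=> //; rewrite (leq_trans (leq_pred _) mq) /=.
      by apply/eqP/modS_pred => //; rewrite mx bw addn1.
  + exists (maxn p m.+1), q, m.+1, false; split; last by move: wk; rewrite /cost /=; lia.
    split=> [y yr hb|]; first by move: (cov y yr hb) => /orP[h|h]; apply/orP; [left|right]; lia.
    by rewrite leq_maxr /= addnS -addSn -modnDml -addn1 -bw mx.
-
  case: ev => ev; subst x' b.
  exists p, q, m, s; split; last first.
    by move: wk; have := wt_flip_le a (i.+1 + d * x); rewrite /cost /=; lia.
  split=> // y yr /existsP[j /andP[]]; rewrite flipbitE => hj /existsP[i' /eqP ej].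
  case E: (val j == (i.+1 + d * x) %% n).
    have := coord_inj xr yr; move/eqP: E; rewrite ej => E /(_ _ _ (esym E)) xy.
    by subst y; apply: (pos_cover xr pos).
  move: hj; rewrite E addbF => hj; apply: cov => //.
  by apply/existsP; exists j; rewrite hj /=; apply/existsP; exists i'; rewrite ej.
Qed.


Lemma r_gt0 : 0 < r. Proof. by apply: (leq_trans _ r3). Qed.

Definition u0 : RCRvert n r := ([ffun => false], Ordinal r_gt0).

Lemma coord_cover (j : 'I_n) : exists y, y < r /\ exists i : 'I_d, val j == (i.+1 + d * y) %% n.
Proof.
case: (posnP (val j)) => [j0|jp].
  exists r.-1; split; first by rewrite prednK ?r_gt0.
  have dd : d.-1 < d by rewrite prednK.
  exists (Ordinal dd); rewrite /= j0 prednK // -mulnS prednK ?r_gt0 // -hn modnn.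
  by [].
have jn : val j < n := ltn_ord j.
have jd : (val j).-1 %% d < d by rewrite ltn_mod.
exists ((val j).-1 %/ d); split.
  by rewrite ltn_divLR // mulnC -hn (leq_ltn_trans (leq_pred _)).
exists (Ordinal jd); rewrite /= addSn addnC mulnC -divn_eq prednK // modn_small //.
Qed.

Lemma empty_zero (a : {ffun 'I_n -> bool}) : (forall y, y < r -> ~~ blk a y) -> a = [ffun => false].
Proof.
move=> he; apply/ffunP => j; rewrite ffunE.
apply/negbTE/negP => aj.
have [y [yr [i hi]]] := coord_cover j.
move: (he y yr); rewrite /blk => /existsP; apply; exists j; rewrite aj /=.
by apply/existsP; exists i.
Qed.

Lemma predr_ok x : x < r -> ((x + r.-1) %% r + 1) %% r = x.
Proof.
move=> xr; rewrite modnDml -addnA addn1 prednK ?r_gt0 //.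
by rewrite -modnDmr modnn addn0 modn_small.
Qed.

Lemma flipK (a : {ffun 'I_n -> bool}) k : flipbit (flipbit a k) k = a.
Proof. by apply/ffunP => j; rewrite !flipbitE -addbA addbb addbF. Qed.

Lemma desc (v : RCRvert n r) p q m s :
  valid v.1 (val v.2) p q m s -> v != u0 ->
  exists (w : RCRvert n r) p' q' m' s',
    [/\ valid w.1 (val w.2) p' q' m' s',
        wt w.1 + cost p' q' m' < wt v.1 + cost p q m & RCRadj d w v].
Proof.
case: v => a [x xr] /= [cov pos] nu0.
case hb: (blk a x).
  move: hb => /existsP[j /andP[aj /existsP[i /eqP ej]]].
  exists (flipbit a (i.+1 + d * x), Ordinal xr), p, q, m, s; split => /=.
  - split=> // y yr /existsP[j' /andP[]]; rewrite flipbitE => hj' hi'.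
    apply: cov => //; apply/existsP; exists j'; rewrite hi' andbT.
    case E: (val j' == (i.+1 + d * x) %% n); last by move: hj'; rewrite E addbF.
    have -> : j' = j by apply/val_inj; rewrite /= ej; apply/eqP.
    by [].
  - by rewrite /cost -(wt_flip_true aj ej) addSn.
  - rewrite /RCRadj /= eqxx /=; apply/orP; right; apply/existsP; exists i.
    by rewrite flipK.
have [m0 | mp] := posnP m.
  subst m.
  have x0 : x = 0.
    by case: s pos => /andP[_ /eqP]; rewrite ?addn0 ?mod0n ?(modn_small xr).
  subst x.
pose xp := (0 + r.-1) %% r.
have xpr : xp < r by rewrite ltn_mod r_gt0.
have xpok : (xp + 1) %% r = 0 by apply: predr_ok; apply: r_gt0.
  case: (posnP q) => [q0|qp].
    case: (posnP p) => [p0|pp].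
      subst p q; case/negP: nu0; apply/eqP; rewrite /u0; congr (_, _); last exact: val_inj.
      apply: empty_zero => y yr; apply/negP => hy.
      move: (cov y yr hy); rewrite addn0 leqn0 => /orP[/eqP y0|]; last by rewrite leqNgt yr.
      by move: hb; rewrite -y0 hy.
    exists (a, Ordinal xpr), p, q, 1, false; split => /=.
    - by split=> //; rewrite pp /= xpok.
    - by rewrite /cost; lia.
    - by rewrite /RCRadj /= eqxx /= xpok eqxx.
  have o1 : 1 < r by apply: ltn_trans r3.
  exists (a, Ordinal o1), p, q, 1, true; split => /=.
  - by split=> //; rewrite qp /= modn_small.
  - by rewrite /cost; lia.
  - by rewrite /RCRadj /= eqxx /= add0n (modn_small o1) eqxx orbT.
pose xs := (x + 1) %% r.
have xsr : xs < r by rewrite ltn_mod r_gt0.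
pose xp := (x + r.-1) %% r.
have xpr : xp < r by rewrite ltn_mod r_gt0.
have xpok : (xp + 1) %% r = x by apply: predr_ok.
case: s pos => /andP[mq /eqP mx].
- case: (ltnP m q) => [mlq|mqge].
  + exists (a, Ordinal xsr), p, q, m.+1, true; split => /=.
    * by split=> //; rewrite mlq /= -addn1 -modnDml mx.
    * by rewrite /cost; lia.
    * by rewrite /RCRadj /= eqxx /= eqxx orbT.
  + have eqq : q = m by apply/eqP; rewrite eqn_leq mqge mq.
    subst q.
    exists (a, Ordinal xpr), p, m.-1, m.-1, true; split => /=.
    * split.
        move=> y yr hy; move: (cov y yr hy) => /orP[ym|]; last by move=> ->; rewrite orbT.
        move: ym; rewrite leq_eqVlt => /orP[/eqP ym|ym].
          have : x = y by rewrite -mx -ym (modn_small yr).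
          by move=> xy; move: hb; rewrite xy hy.
        by rewrite -ltnS prednK // ym.
      rewrite leqnn /=; apply/eqP; apply: modS_pred => //.
      by rewrite mx -xpok addn1.
    * by rewrite /cost; lia.
    * by rewrite /RCRadj /= eqxx /= xpok eqxx.
- case: (ltnP m p) => [mlp|mpge].
  + exists (a, Ordinal xpr), p, q, m.+1, false; split => /=.
    * split=> //; rewrite mlp /=.
      by rewrite addnS -addSn -[xp.+1]addn1 -modnDml xpok mx.
    * by rewrite /cost; lia.
    * by rewrite /RCRadj /= eqxx /= xpok eqxx.
  + have eqp : p = m by apply/eqP; rewrite eqn_leq mpge mq.
    subst p.
    exists (a, Ordinal xsr), m.-1, q, m.-1, false; split => /=.
    * split.
        move=> y yr hy; move: (cov y yr hy) => /orP[->//|].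
        rewrite leq_eqVlt => /orP[/eqP ym|ym]; last first.
          by apply/orP; right; rewrite -ltnS -addnS prednK.
        have : x = y.
          rewrite -(modn_small xr) -(modn_small yr); apply/eqP.
          by rewrite -(eqn_modDr m) mx -ym modnn.
        by move=> xy; move: hb; rewrite xy hy.
      rewrite leqnn /=; apply/eqP.
      by rewrite /xs modnDml -addnA add1n prednK // mx.
    * by rewrite /cost; lia.
    * by rewrite /RCRadj /= eqxx /= eqxx orbT.
Qed.


Lemma wt0 : wt [ffun => false] = 0.
Proof. by rewrite /wt big1 // => j _; rewrite ffunE. Qed.

Lemma Good_mono v k k' : Good v k -> k <= k' -> Good v k'.
Proof. by move=> [p [q [m [s [h1 h2]]]]] kk; exists p, q, m, s; split => //; apply: leq_trans kk. Qed.

Lemma Good_u0 : Good u0 0.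
Proof.
exists 0, 0, 0, true; split; last by rewrite /= wt0.
rewrite /valid /=; split; last by rewrite mod0n.
by move=> y yr; rewrite /blk; case/existsP => j; rewrite ffunE.
Qed.

Lemma sound k (v : RCRvert n r) : v \in RCRball d u0 k -> Good v k.
Proof.
elim: k v => [|k IH] v /=.
  by rewrite inE => /eqP ->; apply: Good_u0.
rewrite inE => /orP[h|].
  by apply: Good_mono (IH _ h) _.
rewrite inE => /existsP[w /andP[hw adj]].
by apply: step adj (IH _ hw).
Qed.

Lemma u0_ball k : u0 \in RCRball d u0 k.
Proof. by elim: k => [|k IH] /=; rewrite !inE ?eqxx ?IH. Qed.

Lemma complete t (v : RCRvert n r) p q m s :
  valid v.1 (val v.2) p q m s -> wt v.1 + cost p q m <= t -> v \in RCRball d u0 t.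
Proof.
elim: t v p q m s => [|t IH] v p q m s hv ht.
  case: (eqVneq v u0) => [->|nu]; first exact: u0_ball.
  have [w [p' [q' [m' [s' [_ lt _]]]]]] := desc hv nu.
  by move: (leq_trans lt ht).
case: (eqVneq v u0) => [->|nu]; first exact: u0_ball.
have [w [p' [q' [m' [s' [hw lt adj]]]]]] := desc hv nu.
have wb : w \in RCRball d u0 t by apply: (IH _ _ _ _ _ hw); rewrite -ltnS (leq_trans lt ht).
rewrite /= !inE; apply/orP; right; apply/existsP; exists w; by rewrite wb adj.
Qed.

Lemma dist_lemma (v : RCRvert n r) K : Good v K -> K < #|RCRvert n r| ->
  Good v (RCRdist d u0 v) /\ RCRdist d u0 v <= K.
Proof.
move=> [p [q [m [s [hv ht]]]]] KN.
have vb := complete hv ht.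
set P := (fun k => v \in RCRball d u0 k).
have hasK : has P (iota 0 #|RCRvert n r|).
  by apply/hasP; exists K => //; rewrite mem_iota.
rewrite /RCRdist -/P.
have fl : find P (iota 0 #|RCRvert n r|) < #|RCRvert n r|.
  by move: hasK; rewrite has_find size_iota.
split.
  apply: sound; have := nth_find 0 hasK; rewrite nth_iota //.
case: (leqP (find P (iota 0 #|RCRvert n r|)) K) => // /(before_find 0).
by rewrite nth_iota // /P add0n vb.
Qed.


Definition Wf x := if x == 0 then r else r - 2 + minn x (r - x).

Lemma modcase1 m x : m %% r = x -> m = x \/ r + x <= m.
Proof.
move=> e; have := divn_eq m r; rewrite e.
case: (m %/ r) => [|t]; first by rewrite mul0n add0n; left.
by rewrite mulSn => ->; right; lia.
Qed.

Lemma modcase0 u : u %% r = 0 -> u = 0 \/ u = r \/ 2 * r <= u.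
Proof.
move=> e; have := divn_eq u r; rewrite e addn0.
case: (u %/ r) => [|[|t]]; first by rewrite mul0n; left.
  by rewrite mul1n; right; left.
by rewrite !mulSn => ->; right; right; lia.
Qed.

Lemma LB1 a x p q m s : valid a x p q m s -> minn x (r - x) <= cost p q m.
Proof.
move=> [_ pos]; rewrite /cost; case: s pos => /andP[mq /eqP e].
  by case: (modcase1 e) => h; lia.
by case: (modcase0 e) => [h|[h|h]]; lia.
Qed.

Lemma LB2 a p q m s : valid a 0 p q m s -> blk a 1 -> 2 <= cost p q m.
Proof.
move=> [cov pos] b1; have := cov 1 (ltn_trans (isT : 1 < 2) r3) b1.
rewrite /cost; case: s pos => /andP[mq /eqP e] /orP[h|h].
- by case: (modcase1 e) => h'; lia.
- by case: (modcase1 e) => h'; lia.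
- by rewrite add0n in e; case: (modcase0 e) => [h'|[h'|h']]; lia.
- by rewrite add0n in e; case: (modcase0 e) => [h'|[h'|h']]; lia.
Qed.

Lemma LB3 a x p q m s : x < r -> valid a x p q m s -> Wf x <= cost p q m + 2 * (r.-1 - (p + q)).
Proof.
move=> xr [_ pos]; rewrite /cost /Wf; have r3' := r3.
case: s pos => /andP[mq /eqP e].
  case: (modcase1 e) => h; case: eqP => hx; lia.
case: (modcase0 e) => [h|[h|h]]; case: eqP => hx; lia.
Qed.

Lemma LB4 a x p q m s k : valid a x p q m s -> k < r.-1 - (p + q) ->
  exists y0, y0 + k < r /\ forall y, y0 <= y -> y <= y0 + k -> ~~ blk a y.
Proof.
move=> [cov _] hk; exists q.+1; split; first lia.
move=> y h1 h2; apply/negP => hb.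
have yr : y < r by lia.
by move: (cov y yr hb) => /orP[h|h]; lia.
Qed.

Lemma up_good a (X : 'I_r) : Good (a, X) (wt a + Wf X).
Proof.
case: X => x xr; rewrite /Wf /=.
case: eqP => [x0|/eqP xn0].
  subst x; exists 0, r, r, true; split; last by rewrite /cost /=; lia.
  split; last by rewrite /= leqnn modnn.
  by move=> y yr _; rewrite ltnW.
case: (leqP x (r - x)) => hx.
  exists (r - x), x.-1, (r - x), false; split; last by rewrite /cost /=; lia.
  split; last by rewrite /= leqnn subnKC ?modnn // ltnW.
  by move=> y yr _; apply/orP; case: (leqP y x.-1) => h; [left|right; lia].
exists (r.-1 - x), x, x, true; split; last by rewrite /cost /=; lia.
split; last by rewrite /= leqnn (modn_small xr) eqxx.
by move=> y yr _; apply/orP; case: (leqP y x) => h; [left|right; lia].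
Qed.

Lemma wt_le a : wt a <= n.
Proof.
apply: (@leq_trans (\sum_(j : 'I_n) 1)); first by apply: leq_sum => j _; apply: leq_b1.
by rewrite sum1_card card_ord.
Qed.

Lemma card_V : #|RCRvert n r| = expn 2 n * r.
Proof. rewrite (@card_prod {ffun 'I_n -> bool} ('I_r)). by rewrite card_ffun card_bool !card_ord. Qed.

Lemma Wf_le x : Wf x <= 2 * r.
Proof. rewrite /Wf; case: eqP => _; lia. Qed.

Lemma small_enough a (X : 'I_r) : wt a + Wf X < #|RCRvert n r|.
Proof.
rewrite card_V.
have h1 := wt_le a; have h2 := Wf_le X.
have h3 : n < expn 2 n by apply: ltn_expl.
have n3 : 3 <= n by rewrite hn; have := r3; nia.
have r3' := r3.
apply: (leq_ltn_trans (_ : _ <= n + 2 * r)); first lia.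
apply: (leq_trans (_ : _ <= n.+1 * r)); last by rewrite leq_mul2r h3 orbT.
nia.
Qed.

Lemma dist_up (v : RCRvert n r) : RCRdist d u0 v <= wt v.1 + Wf (val v.2).
Proof. case: v => a X; exact: (dist_lemma (up_good a X) (small_enough a X)).2. Qed.

Lemma dist_good (v : RCRvert n r) : Good v (RCRdist d u0 v).
Proof. case: v => a X; exact: (dist_lemma (up_good a X) (small_enough a X)).1. Qed.


Definition negf (a : {ffun 'I_n -> bool}) : {ffun 'I_n -> bool} := [ffun j => ~~ a j].

Lemma negfK : involutive negf.
Proof. by move=> a; apply/ffunP => j; rewrite !ffunE negbK. Qed.

Lemma sum_negf (F : {ffun 'I_n -> bool} -> nat) :
  \sum_a F a = \sum_a F (negf a).
Proof. by rewrite (reindex_inj (inv_inj negfK)). Qed.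

Lemma sum_pair_negf (F : {ffun 'I_n -> bool} -> nat) c :
  (forall a, F a + F (negf a) = c) -> 2 * \sum_a F a = c * expn 2 n.
Proof.
move=> h; rewrite mul2n -addnn {2}sum_negf -big_split /=.
rewrite (eq_bigr (fun _ => c)) // sum_nat_const card_ffun card_bool card_ord.
by rewrite mulnC.
Qed.

Lemma S_wt : 2 * \sum_a wt a = n * expn 2 n.
Proof.
apply: sum_pair_negf => a; rewrite /wt -big_split /=.
rewrite (eq_bigr (fun _ => 1)); first by rewrite sum1_card card_ord.
by move=> j _; rewrite ffunE; case: (a j).
Qed.

Lemma S_bit (j : 'I_n) : 2 * \sum_(a : {ffun 'I_n -> bool}) (a j : nat) = expn 2 n.
Proof.
rewrite -[X in _ = X]mul1n; apply: sum_pair_negf => a.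
by rewrite ffunE; case: (a j).
Qed.

Definition g k := \sum_(0 <= x < k) minn x (k - x).

Lemma g_rec k : g k.+2 = g k + k.+1.
Proof.
rewrite /g big_nat_recl // min0n add0n.
rewrite (eq_big_nat _ _ (F2 := fun x => minn x (k - x) + 1)); last first.
  by move=> x /andP[_ xk]; rewrite subSS; lia.
rewrite big_split /= sum_nat_const_nat subn0 muln1 big_nat_recr //= subnn minn0.
by rewrite addn0.
Qed.

Lemma g_bounds k : 4 * g k <= k * k /\ k * k <= 4 * g k + 1.
Proof.
elim: k {-2}k (leqnn k) => [|K IH] k hk.
  by move: hk; rewrite leqn0 => /eqP ->; rewrite /g big_geq.
case: k hk => [|[|k]] hk.
- by rewrite /g big_geq.
- by rewrite /g big_nat1.
rewrite g_rec; have [h1 h2] : 4 * g k <= k * k /\ k * k <= 4 * g k + 1 by apply: IH; lia.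
split; nia.
Qed.

Lemma SW_eq : \sum_(X : 'I_r) Wf X = r + r.-1 * (r - 2) + g r.
Proof.
rewrite -(big_mkord xpredT (fun x => Wf x)).
rewrite (big_ltn r_gt0) {1}/Wf eqxx.
rewrite (eq_big_nat _ _ (F2 := fun x => (r - 2) + minn x (r - x))); last first.
  by move=> x /andP[x1 _]; rewrite /Wf; case: eqP => // e; move: x1; rewrite e.
rewrite big_split /= sum_nat_const_nat.
rewrite /g (big_ltn r_gt0) min0n add0n.
by rewrite addnA subn1.
Qed.


Definition Ep k y0 (a : {ffun 'I_n -> bool}) :=
  [forall y : 'I_r, ((y0 <= y) && (y <= y0 + k)) ==> ~~ blk a y].

Definition bad k (a : {ffun 'I_n -> bool}) :=
  [exists y0 : 'I_r, (y0 + k < r) && Ep k y0 a].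

Lemma card_set_sum (P : pred {ffun 'I_n -> bool}) : #|[set a | P a]| = \sum_a (P a : nat).
Proof.
rewrite -sum1_card big_mkcond /=; apply: eq_bigr => a _; rewrite inE.
by case: (P a).
Qed.

Definition coordo y : 'I_n := Ordinal (ltn_pmod (0.+1 + d * y) n_gt0).

Lemma Ep_count k y0 : y0 + k < r -> #|[set a | Ep k y0 a]| * expn 2 k.+1 <= expn 2 n.
Proof.
move=> hk.
pose T := [set coordo (y0 + val i) | i : 'I_k.+1].
have cT : #|T| = k.+1.
  rewrite card_imset ?card_ord // => i i' /(congr1 val) /= e.
  apply/val_inj/eqP; rewrite -(eqn_add2l y0); apply/eqP.
  have iok : 0 < d := d1.
  apply: (@coord_inj (Ordinal iok) (Ordinal iok) (y0 + i) (y0 + i')); first by have := ltn_ord i; lia.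
    by have := ltn_ord i'; lia.
  exact: e.
have sub : [set a | Ep k y0 a] \subset pffun_on false (~: T) predT.
  apply/subsetP => a; rewrite inE => /forallP he; apply/pffun_onP; split; last by move=> z.
  apply/subsetP => j; rewrite !inE /= => aj; apply/imsetP => -[i _ ej].
  have yr : y0 + i < r by have := ltn_ord i; lia.
  move: (he (Ordinal yr)); rewrite /= leq_addr /= leq_add2l -ltnS ltn_ord /=.
  have aj' : a j by move: aj; case: (a j).
  case/negP; apply/existsP; exists j; rewrite aj' /=; apply/existsP; exists (Ordinal d1).
  by rewrite ej.
have := subset_leq_card sub; rewrite card_pffun_on card_bool.
have cc := cardsC T; rewrite cT card_ord in cc.
move=> h; apply: (leq_trans (leq_mul h (leqnn _))).
by rewrite -expnD addnC cc.
Qed.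

Lemma bad_count k : #|[set a | bad k a]| * expn 2 k.+1 <= r * expn 2 n.
Proof.
rewrite card_set_sum.
have h1 : \sum_a (bad k a : nat) <= \sum_a \sum_(y0 : 'I_r | y0 + k < r) (Ep k y0 a : nat).
  apply: leq_sum => a _; case ba: (bad k a) => //.
  move/existsP: ba => [y0 /andP[hy he]].
  by rewrite (bigD1 y0) //= he.
rewrite exchange_big /= in h1.
apply: (leq_trans (leq_mul h1 (leqnn _))).
rewrite big_distrl /=.
apply: (leq_trans (_ : _ <= \sum_(y0 : 'I_r | y0 + k < r) expn 2 n)).
  apply: leq_sum => y0 hy; rewrite -card_set_sum; exact: Ep_count.
apply: (leq_trans (_ : _ <= \sum_(y0 : 'I_r) expn 2 n)).
  by rewrite [X in _ <= X](bigID (fun y0 : 'I_r => y0 + k < r)) /= leq_addr.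
by rewrite sum_nat_const card_ord.
Qed.


Lemma td_eq : RCRtd n d r = \sum_(v : RCRvert n r) RCRdist d u0 v.
Proof.
by rewrite /RCRtd (big_pred1 u0) // => -[a X] /=.
Qed.

Lemma sumV (F : RCRvert n r -> nat) :
  \sum_(v : RCRvert n r) F v = \sum_(a : {ffun 'I_n -> bool}) \sum_(X : 'I_r) F (a, X).
Proof. by rewrite pair_bigA; apply: eq_bigr => -[a X]. Qed.

Lemma dist_lb_small a (X : 'I_r) :
  wt a + minn X (r - X) + 2 * ((val X == 0) && a (coordo 1)) <= RCRdist d u0 (a, X).
Proof.
have [p [q [m [s [hv ht]]]]] := dist_good (a, X).
apply: leq_trans ht => /=.
have h1 := LB1 hv.
case: eqP => [x0|_]; last by rewrite andFb muln0 addn0 leq_add2l.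
case ha: (a (coordo 1)); last by rewrite muln0 addn0 leq_add2l.
have b1 : blk a 1.
  apply/existsP; exists (coordo 1); rewrite ha /=; apply/existsP; exists (Ordinal d1).
  by [].
move: hv; rewrite /= x0 => hv.
have h2 := LB2 hv b1.
rewrite min0n; lia.
Qed.

Lemma dist_lb_large k a (X : 'I_r) :
  wt a + Wf X <= RCRdist d u0 (a, X) + 2 * k + bad k a * Wf X.
Proof.
have [p [q [m [s [hv ht]]]]] := dist_good (a, X).
case ba: (bad k a); first by rewrite mul1n; move: ht; rewrite /=; lia.
rewrite mul0n addn0.
have h3 := LB3 (ltn_ord X) hv.
case: (leqP (r.-1 - (p + q)) k) => hk.
  by move: ht h3; rewrite /=; lia.
have [y0 [hy0 hw]] := LB4 hv hk.
have y0r : y0 < r by lia.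
move/negbT: ba => /negP; case; apply/existsP; exists (Ordinal y0r); rewrite /= hy0 /=.
by apply/forallP => y; apply/implyP => /andP[h1 h2]; apply: hw.
Qed.

Lemma sum_const_a (c : nat) : \sum_(a : {ffun 'I_n -> bool}) c = expn 2 n * c.
Proof. by rewrite sum_nat_const card_ffun card_bool card_ord. Qed.

Lemma total_up : RCRtd n d r <= r * \sum_a wt a + expn 2 n * \sum_(X : 'I_r) Wf X.
Proof.
rewrite td_eq.
apply: (@leq_trans (\sum_(v : RCRvert n r) (wt v.1 + Wf (val v.2)))); first by apply: leq_sum => v _; apply: dist_up.
rewrite sumV.
rewrite (eq_bigr (fun a => r * wt a + \sum_(X : 'I_r) Wf X)); last first.
  move=> a _; rewrite big_split /= sum_nat_const card_ord //.
by rewrite big_split /= -big_distrr /= sum_const_a.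
Qed.

Lemma total_small : r * \sum_a wt a + expn 2 n * g r + 2 * \sum_(a : {ffun 'I_n -> bool}) (a (coordo 1) : nat)
   <= RCRtd n d r.
Proof.
rewrite td_eq sumV.
apply: (@leq_trans (\sum_(a : {ffun 'I_n -> bool}) \sum_(X : 'I_r) (wt a + minn X (r - X) + 2 * ((val X == 0) && a (coordo 1))))); last first.
  by apply: leq_sum => a _; apply: leq_sum => X _; apply: dist_lb_small.
rewrite [X in _ <= X](eq_bigr (fun a => r * wt a + g r + 2 * (a (coordo 1) : nat))); last first.
  move=> a _; rewrite !big_split /= sum_nat_const card_ord.
  congr (_ + _ + _).
    by rewrite /g -(big_mkord xpredT (fun x => minn x (r - x))).
  rewrite [\sum_(i < r) 0]big1 // addn0 addnn -mul2n; congr (2 * _).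
  rewrite (bigD1 (Ordinal r_gt0)) //= big1 ?addn0 // => X hX.
  by case: eqP => // e; case/eqP: hX; apply: val_inj.
by rewrite big_split big_split -!big_distrr sum_const_a; apply: leqnn.
Qed.

Lemma total_large k c : c = 2 * k -> r * \sum_a wt a + expn 2 n * \sum_(X : 'I_r) Wf X <=
   RCRtd n d r + expn 2 n * (r * c) + #|[set a | bad k a]| * \sum_(X : 'I_r) Wf X.
Proof.
move=> hc; rewrite td_eq.
have e1 : \sum_(v : RCRvert n r) RCRdist d u0 v + expn 2 n * (r * c) +
          #|[set a | bad k a]| * \sum_(X : 'I_r) Wf X =
          \sum_a \sum_(X : 'I_r) (RCRdist d u0 (a, X) + c + bad k a * Wf X).
  rewrite sumV; symmetry; rewrite (eq_bigr (fun a => \sum_(X : 'I_r) RCRdist d u0 (a, X) + r * c + bad k a * \sum_(X : 'I_r) Wf X)); last first.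
    by move=> a _; rewrite !big_split /= sum_nat_const card_ord big_distrr.
  by rewrite !big_split /= sum_const_a card_set_sum big_distrl.
rewrite e1.
apply: (@leq_trans (\sum_(a : {ffun 'I_n -> bool}) \sum_(X : 'I_r) (wt a + Wf X))); last first.
  by apply: leq_sum => a _; apply: leq_sum => X _; rewrite hc; apply: dist_lb_large.
rewrite [X in _ <= X](eq_bigr (fun a => r * wt a + \sum_(X : 'I_r) Wf X)); last first.
  move=> a _; rewrite big_split /= sum_nat_const card_ord //.
by rewrite big_split /= -big_distrr /= sum_const_a.
Qed.


Lemma SW_bounds : 5 * r * r + 7 <= 4 * \sum_(X : 'I_r) Wf X + 8 * r /\
                  4 * \sum_(X : 'I_r) Wf X + 8 * r <= 5 * r * r + 8.
Proof.
rewrite SW_eq; have [h1 h2] := g_bounds r; have r3' := r3.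
have e : r.-1 * (r - 2) + 3 * r = r * r + 2.
  have -> : r = (r - 3).+3 by lia.
  move: (r - 3) => s; rewrite !subSS /= subn0; nia.
split; nia.
Qed.

Lemma NU : RCRtd n d r * 4 + expn 2 n * (r * 8) <= expn 2 n * (n * r * 2 + r * r * 5 + 8).
Proof.
have h := total_up; have hw := S_wt; have [s1 s2] := SW_bounds.
set W := \sum_a wt a in h hw; set S := \sum_(X : 'I_r) Wf X in h s1 s2.
set E := expn 2 n in h hw *.
have r3' := r3.
have : E * (4 * S + 8 * r) <= E * (5 * r * r + 8) by rewrite leq_mul2l s2 orbT.
nia.
Qed.

Lemma NS : expn 2 n * (n * r * 2 + r * r) <= RCRtd n d r * 4.
Proof.
have h := total_small; have hw := S_wt; have hb := S_bit (coordo 1).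
have [g1 g2] := g_bounds r.
set W := \sum_a wt a in h hw; set Bt := \sum_(a : {ffun 'I_n -> bool}) (a (coordo 1) : nat) in h hb.
set E := expn 2 n in h hw hb *.
have : E * (r * r) <= E * (4 * g r + 1) by rewrite leq_mul2l g2 orbT.
nia.
Qed.

Lemma NL : expn 2 n * (n * r * 2 + r * r * 5) <=
   RCRtd n d r * 4 + expn 2 n * r * ((trunc_log 2 r).+1 * 16 + 11).
Proof.
set m := (trunc_log 2 r).+1.
have h := total_large (k := 2 * m) (erefl _).
have hw := S_wt; have [s1 s2] := SW_bounds.
have hbc := bad_count (2 * m).
have rm : r < expn 2 m by apply: trunc_log_ltn.
have r2 : r * r <= expn 2 (2 * m) by rewrite mul2n -addnn expnD leq_mul // ltnW.
set W := \sum_a wt a in h hw; set S := \sum_(X : 'I_r) Wf X in h s1 s2.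
set B := #|[set a | bad (2 * m) a]| in h hbc.
set E := expn 2 n in h hw hbc *.
have r3' := r3.
have hB : 2 * (B * r * r) <= E * r.
  have : B * (2 * (r * r)) <= B * expn 2 (2 * m).+1 by rewrite expnS leq_mul2l leq_mul2l r2 !orbT.
  move=> h1; have h2 := leq_trans h1 hbc.
  have : r * (2 * (B * r)) <= r * E by nia.
  rewrite leq_mul2l; case/orP => [|h3]; first lia.
  nia.
have hS : E * (5 * r * r + 7) <= E * (4 * S + 8 * r) by rewrite leq_mul2l s1 orbT.
have hS2 : B * (4 * S + 8 * r) <= B * (5 * r * r + 8) by rewrite leq_mul2l s2 orbT.
nia.
Qed.

End G.

Unset Implicit Arguments.

Lemma expn_pow a b : expn a b = Nat.pow a b.
Proof. elim: b => // b IH; rewrite expnS IH. by []. Qed.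

Lemma INR_exp2 k : INR (expn 2 k) = (2 ^ k)%R.
Proof. by rewrite expn_pow pow_INR. Qed.

Lemma leINR {a b : nat} : (a <= b)%N -> (INR a <= INR b)%R.
Proof. by move/leP; apply: le_INR. Qed.

Lemma INR_mul a b : INR (a * b) = (INR a * INR b)%R.
Proof. exact: mult_INR. Qed.

Lemma INR_add a b : INR (a + b) = (INR a + INR b)%R.
Proof. exact: plus_INR. Qed.

Theorem mainTheorem12 (d r n : nat) :
  (1 <= d)%N -> (3 <= r)%N -> n = (d * r)%N -> (2 <= n)%N ->
  let td := INR (RCRtd n d r) in
  let N := INR n in let Rr := INR r in let D := INR d in
  let lg := (ln Rr / ln 2)%R in
  ((2 ^ 9 <= r)%N ->
     (2 ^ (n - 2) * Rr ^ 2 * (2 * D + 5) * (1 - 20 * lg ^ 2 / (2 * N + 5 * Rr))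
        <= td
      /\ td <= 2 ^ (n - 2) * Rr ^ 2 * (2 * D + 5)
               * (1 - 8 * (Rr - 1) / (2 * N * Rr + 5 * Rr ^ 2)))%R)
  /\
  ((r < 2 ^ 9)%N ->
     (2 ^ (n - 2) * (2 * N * Rr + Rr ^ 2) <= td
      /\ td <= 2 ^ (n - 2) * (2 * N * Rr + 5 * Rr ^ 2 - 8 * Rr + 8))%R).
Proof.
move=> hd hr hn hn2 td N Rr D lg.
have hU := NU hd hr hn.
have hS := NS hd hr hn.
have hL := NL hd hr hn.
move: hU hS hL => /leINR hU /leINR hS /leINR hL.
do 4 rewrite ?INR_add ?INR_mul in hU hS hL.
rewrite !INR_exp2 in hU hS hL.
set T := trunc_log 2 r in hL.
rewrite -/td -/N -/Rr in hU hS hL.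
have E4 : (2 ^ n = 4 * 2 ^ (n - 2))%R.
  have -> : n = (2 + (n - 2))%N by rewrite subnKC.
  by rewrite pow_add addKn; simpl; ring.
rewrite E4 in hU hS hL.
set P := (2 ^ (n - 2))%R in hU hS hL *.
have Ppos : (0 < P)%R by apply: pow_lt; lra.
have Rpos : (3 <= Rr)%R.
  by have := leINR hr; rewrite /Rr; simpl; lra.
have Dpos : (1 <= D)%R by have := leINR hd; rewrite /D; simpl; lra.
have hN : N = (D * Rr)%R by rewrite /N hn INR_mul.
have e8 : INR 8 = 8%R by simpl; ring.
have e5 : INR 5 = 5%R by simpl; ring.
have e4 : INR 4 = 4%R by simpl; ring.
have e2 : INR 2 = 2%R by simpl; ring.
have e16 : INR 16 = 16%R by simpl; ring.
have e11 : INR 11 = 11%R by simpl; ring.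
rewrite ?e8 ?e5 ?e4 ?e2 ?e16 ?e11 in hU hS hL.
have up : (td <= P * (2 * N * Rr + 5 * Rr ^ 2 - 8 * Rr + 8))%R by nra.
split => [h9|h9].
  split; last first.
    have -> : (P * Rr ^ 2 * (2 * D + 5) * (1 - 8 * (Rr - 1) / (2 * N * Rr + 5 * Rr ^ 2)) =
               P * (2 * N * Rr + 5 * Rr ^ 2 - 8 * Rr + 8))%R.
      rewrite hN; field; nra.
    exact: up.
  have T9 : (9 <= T)%N by apply: trunc_log_max.
  have lgT : (INR T <= lg)%R.
    have h2T : (2 ^ T <= Rr)%R.
      rewrite -INR_exp2; apply: leINR; apply: trunc_logP => //; lia.
    have ln2 : (0 < ln 2)%R by have := ln_lt_2; lra.
    have : (INR T * ln 2 <= ln Rr)%R.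
      rewrite -ln_pow; last lra.
      case: (Rle_lt_or_eq_dec _ _ h2T) => h; last by rewrite h; lra.
      by apply: Rlt_le; apply: ln_increasing => //; apply: pow_lt; lra.
    move=> h; rewrite /lg; apply: (Rmult_le_reg_r (ln 2)) => //.
    by rewrite /Rdiv Rmult_assoc Rinv_l; lra.
  have T9r : (9 <= INR T)%R by have := leINR T9; simpl; lra.
  have key : (16 * INR T.+1 + 11 <= 20 * lg ^ 2)%R.
    rewrite S_INR; nra.
  have -> : (P * Rr ^ 2 * (2 * D + 5) * (1 - 20 * lg ^ 2 / (2 * N + 5 * Rr)) =
             P * (2 * N * Rr + 5 * Rr ^ 2) - 20 * P * Rr * lg ^ 2)%R.
    rewrite hN; field; nra.
  have : (P * Rr * (16 * INR T.+1 + 11) <= P * Rr * (20 * lg ^ 2))%R.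
    apply: Rmult_le_compat_l => //; nra.
  nra.
split => //.
nra.
Qed.
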